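(* Let $n$ be a positive even integer, let $g(t)=t^{n-1}$, and let $f(t)=\sum_{j=0}^d a_j t^j$ be a real polynomial, written as $f(t)=p(t^2)+t\,q(t^2)$ with $p,q$ real polynomials, such that the function $t\mapsto p(t^2)$ changes sign at most two times in $[-1,1]$. Consider the Abel equation $$x'(t)=f(t)x^3+g(t)x^2,\qquad t\in[-1,1].$$ If this equation has a center at $x=0$, then $$m_k=\int_{-1}^1 f(t)\,(G(t))^k\,dt=0\qquad\text{for all } k=0,1,2,3,4,\ldots,$$ where $G(t)=\int_{-1}^t g(s)\,ds=\frac{1}{n}(t^n-1)$.
   Context: The Abel equation $x'=f(t)x^3+g(t)x^2$ on $[-1,1]$ (with $x$ real) is said to have a center at $x=0$ if every solution $x(t)$ whose initial value $x(-1)$ is small enough in absolute value is defined on $[-1,1]$ and satisfies $x(-1)=x(1)$. *)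

(* Defs.v *)
From HB Require Import structures.
From mathcomp Require Import all_boot all_order all_algebra.
From mathcomp Require Import all_classical all_reals all_analysis.
Set Implicit Arguments. Unset Strict Implicit. Unset Printing Implicit Defensive.
Import Order.TTheory GRing.Theory Num.Theory.
Import numFieldNormedType.Exports.
Local Open Scope classical_set_scope.
Local Open Scope ring_scope.

(* x is a solution of x' = f(t) x^3 + g(t) x^2 on [-1,1]:
   continuous on [-1,1] and satisfying the ODE at every interior point
   (the RHS being continuous, this gives one-sided derivatives at the ends). *)
Definition abel_solution {R : realType} (f g : R -> R) (x : R -> R) : Prop :=
  {within [set` `[-1, 1]], continuous x} /\
  (forall t : R, -1 < t < 1 ->
     is_derive t 1 x (f t * x t ^+ 3 + g t * x t ^+ 2)).

Definition abel_center {R : realType} (f g : R -> R) : Prop :=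
  exists2 delta : R, 0 < delta &
    forall x0 : R, `|x0| < delta ->
      (exists x : R -> R, abel_solution f g x /\ x (-1) = x0) /\
      (forall x : R -> R, abel_solution f g x -> x (-1) = x0 -> x 1 = x0).

Definition at_most_two_sign_changes {R : realType} (h : R -> R) : Prop :=
  ~ exists t0 t1 t2 t3 : R,
      [/\ -1 <= t0, t0 < t1, t1 < t2, t2 < t3 & t3 <= 1] /\
      [/\ h t0 * h t1 < 0, h t1 * h t2 < 0 & h t2 * h t3 < 0].

(* Main.v *)
Require Import Defs.
From HB Require Import structures.
From mathcomp Require Import all_boot all_order all_algebra.
From mathcomp Require Import all_classical all_reals all_analysis.
From mathcomp Require Import ring lra.
Import Order.TTheory GRing.Theory Num.Theory.
Import numFieldNormedType.Exports.
Local Open Scope classical_set_scope.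
Local Open Scope ring_scope.

Section Aux.
Context {R : realType}.
Implicit Types (a b t : R) (k : R -> R).

Lemma cont_int a b t k : {within `[a,b], continuous k} -> a < t < b -> {for t, continuous k}.
Proof.
move=> hk /andP[hat tb]; have ab := lt_trans hat tb.
by move/(continuous_within_itvP _ ab): hk => [h _ _]; apply: h; rewrite in_itv /= hat tb.
Qed.

Lemma weight a b k : a < b -> {within `[a,b], continuous k} ->
  exists W : R -> R, [/\ {within `[a,b], continuous W}, (forall t, 0 < W t) &
     (forall t, a < t < b -> is_derive t 1 W (k t * W t))].
Proof.
move=> ab hk.
pose K := fun x => parameterized_integral (@lebesgue_measure R) a x k.
have ik : (@lebesgue_measure R).-integrable `[a, b] (EFin \o k).
  by apply: continuous_compact_integrable => //; exact: segment_compact.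
exists (expR \o K); split.
- move=> x.
  have h1 := (@parameterized_integral_continuous R a b k (ltW ab) ik x).
  have h2 := @continuous_expR R (K x).
  exact: (continuous_comp h1 h2).
- by move=> t; exact: expR_gt0.
- move=> t /andP[hat tb].
  have ct : {for t, continuous k} by apply: (cont_int _ _ _ _ hk); rewrite hat tb.
  have [d e] := continuous_FTC1_closed (f:=k) (a:=a) (x:=t) (u:=b) tb ik hat ct.
  have dK : is_derive t 1 K (k t).
    by rewrite -e derive1E; exact: derivableP.
  rewrite mulrC; exact: is_derive1_comp.
Qed.

Lemma isd_der (f : R -> R) (x df : R) : is_derive x 1 f df -> derivable f x 1.
Proof. by move=> h; exact: (@ex_derive _ _ _ _ _ _ _ h). Qed.
Arguments isd_der {f x df}.

Lemma is_deriveV' (f : R -> R) x (df : R) : f x != 0 -> is_derive x 1 f df ->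
  is_derive x 1 (fun y => (f y)^-1) (- (f x)^-2 * df).
Proof.
move=> fx0 hd; have h1 := isd_der hd.
have h2 := derivableV fx0 h1.
apply: DeriveDef => //.
by rewrite deriveV // derive_val.
Qed.
Arguments is_deriveV' {f x df}.

Lemma nincr a b (h dh : R -> R) :
  (forall t, a < t < b -> is_derive t 1 h (dh t)) -> (forall t, a < t < b -> dh t <= 0) ->
  {within `[a,b], continuous h} -> forall x y, a <= x -> x <= y -> y <= b -> h y <= h x.
Proof.
move=> hd hle hc; apply: ler0_derive1_nincr => //.
- by move=> t; rewrite in_itv /= => /hd /isd_der.
- by move=> t; rewrite in_itv /= => tab; have hdt := hd _ tab; rewrite derive1E derive_val; exact: hle.
Qed.

Lemma incr a b (h dh : R -> R) :
  (forall t, a < t < b -> is_derive t 1 h (dh t)) -> (forall t, a < t < b -> 0 < dh t) ->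
  {within `[a,b], continuous h} -> forall x y, a <= x -> x < y -> y <= b -> h x < h y.
Proof.
move=> hd hle hc; apply: gtr0_derive1_incr => //.
- by move=> t; rewrite in_itv /= => /hd /isd_der.
- by move=> t; rewrite in_itv /= => tab; have hdt := hd _ tab; rewrite derive1E derive_val; exact: hle.
Qed.

Lemma cst_on a b (h : R -> R) :
  (forall t, a < t < b -> is_derive t 1 h 0) ->
  {within `[a,b], continuous h} -> forall t, a <= t <= b -> h t = h a.
Proof.
move=> hd hc t /andP[ha hb]; apply/eqP; rewrite eq_le; apply/andP; split.
- by apply: (@nincr a b h (fun _ => 0)) => //.
- rewrite -lerN2; apply: (@nincr a b (fun t => - h t) (fun _ => 0)) (ha) (hb) => //.
  + by move=> s hs; rewrite -oppr0; apply: is_deriveN; exact: hd.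
  + by move=> x; apply: continuousN; exact: hc.
Qed.

Lemma lin_pos a b (x k : R -> R) : a < b ->
  {within `[a,b], continuous x} -> {within `[a,b], continuous k} ->
  (forall t, a < t < b -> is_derive t 1 x (k t * x t)) ->
  0 < x a -> forall t, a <= t <= b -> 0 < x t.
Proof.
move=> ab hx hk hd xa t tab.
have [W [Wc Wp Wd]] := weight _ _ _ ab hk.
pose h := x * (fun y => (W y)^-1).
have hc : {within `[a,b], continuous h}.
  move=> s; apply: continuousM; first exact: hx.
  apply: continuousV; first by rewrite gt_eqF.
  exact: Wc.
have hd0 : forall s, a < s < b -> is_derive s 1 h 0.
  move=> s sab.
  have dW := is_deriveV' (lt0r_neq0 (Wp s)) (Wd s sab).
  have := is_deriveM (hd s sab) dW.
  move=> H; apply: is_derive_eq H _.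
  rewrite -![_ *: _]/(_ * _); field.
  exact: lt0r_neq0.
have := cst_on _ _ _ hd0 hc _ tab; rewrite /h /= => e.
have : 0 < x t / W t by move: e; rewrite !fctE => ->; rewrite divr_gt0.
by rewrite pmulr_lgt0 // invr_gt0.
Qed.
End Aux.

Section S. Context {R : realType}.
Lemma poly_zero_itv (p : {poly R}) (al be : R) : al < be ->
  (forall s, al < s < be -> p.[s] = 0) -> p = 0.
Proof.
move=> ab hp; apply/eqP; apply: contraT => pn0.
pose c := be - al.
have c0 : 0 < c by rewrite subr_gt0.
pose rs := [seq al + c / (i.+2)%:R | i <- iota 0 (size p)].
have : (size rs < size p)%N.
  apply: max_poly_roots pn0 _ _.
  - apply/allP => s /mapP [i _ ->]; apply/eqP/hp.
    have i0 : (0 : R) < (i.+2)%:R by rewrite ltr0n.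
    apply/andP; split; first by rewrite ltrDl divr_gt0.
    rewrite -ltrBrDl -/c ltr_pdivrMr // ltr_pMr //.
    by rewrite ltr1n.
  - rewrite map_inj_uniq ?iota_uniq // => i j /addrI /(mulrI (unitf_gt0 c0)) /invr_inj.
    by move/eqP; rewrite eqr_nat => /eqP [].
by rewrite size_map size_iota ltnn.
Qed.
End S.

Section S. Context {R : realType}.
Definition no_triple (h : R -> R) := ~ (exists a b c : R,
  [/\ 0 < a, a < b, b < c & c <= 1] /\ h a * h b < 0 /\ h b * h c < 0).

Lemma sign_core (h : R -> R) a b : no_triple h -> 0 < a -> a < b -> b <= 1 ->
  0 < h a -> h b < 0 -> exists ts, 0 <= ts <= 1 /\ forall t, 0 < t <= 1 -> 0 <= (ts - t) * h t.
Proof.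
move=> nt a0 ab b1 ha hb.
have key : forall d e, 0 < d <= 1 -> 0 < e <= 1 -> h d < 0 -> 0 < h e -> e < d.
  move=> d e /andP[d0 d1] /andP[e0 e1] hd he; rewrite ltNge; apply/negP => de.
  have {}de : d < e by rewrite lt_neqAle de andbT; apply/eqP => E; move: hd; rewrite E ltNge ltW.
  case: (ltP b e) => be.
  - apply: nt; exists a, b, e; split; first by split.
    by split; [rewrite pmulr_rlt0 | rewrite nmulr_rlt0].
  - have eb : e < b by rewrite lt_neqAle be andbT; apply/eqP => E; move: he; rewrite E ltNge ltW.
    apply: nt; exists d, e, b; split; first by split => //; exact: le_trans b1.
    by split; [rewrite nmulr_rlt0 | rewrite pmulr_rlt0].
pose S := [set t : R | 0 < t <= 1 /\ 0 < h t].
have Sa : S a by split => //; rewrite a0 /= (le_trans (ltW ab) b1).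
have Sub : has_ubound S by exists 1 => t [/andP[_ ?] _].
exists (sup S); split.
  apply/andP; split.
    by apply: le_trans (ltW a0) _; exact: ub_le_sup.
  by apply: ge_sup; [exists a | move=> t [/andP[_ ?] _]].
move=> t t01.
have [hn|hp|->] := ltgtP (h t) 0; last by rewrite mulr0.
- rewrite nmulr_lge0 // subr_le0; apply: ge_sup; first by exists a.
  by move=> e [e01 he]; apply/ltW/key.
- rewrite pmulr_lge0 // subr_ge0; exact: ub_le_sup.
Qed.

Lemma sign_struct (h : R -> R) : no_triple h ->
  exists ts sg : R, [/\ 0 <= ts <= 1, sg = 1 \/ sg = -1 &
    forall t, 0 < t <= 1 -> 0 <= sg * (t - ts) * h t].
Proof.
move=> nt.
have [[a [b [[a0 ab b1] hab]]]|npair] := pselect (exists a b, [/\ 0 < a, a < b & b <= 1] /\ h a * h b < 0).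
  have [ha|ha|ha] := ltgtP (h a) 0; last by move: hab; rewrite ha mul0r ltxx.
  - have nt' : no_triple (fun t => - h t).
      move=> [x [y [z [H [H1 H2]]]]]; apply: nt; exists x, y, z; split => //.
      by move: H1 H2; rewrite !mulrNN.
    have [||ts [ts01 H]] := sign_core _ _ _ nt' a0 ab b1; first by rewrite oppr_gt0.
      by rewrite oppr_lt0 -(nmulr_rlt0 _ ha).
    exists ts, 1; split => //; first by left.
    move=> t /H; by rewrite mul1r mulrN -mulNr opprB.
  - have [|ts [ts01 H]] := sign_core _ _ _ nt a0 ab b1 ha; first by rewrite -(pmulr_rlt0 _ ha).
    exists ts, (-1); split => //; first by right.
    by move=> t /H; rewrite mulN1r opprB.
have [[a [/andP[a0 a1] ha]]|npos] := pselect (exists a, (0 < a <= 1) /\ 0 < h a).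
  exists 0, 1; split => //; rewrite ?lexx ?ler01 //; first by left.
  move=> t /andP[t0 t1]; rewrite mul1r subr0 pmulr_rge0 //.
  rewrite leNgt; apply/negP => ht.
  have [a_t|ta|ta] := ltgtP a t.
  - apply: npair; exists a, t; split; first by split.
    by rewrite pmulr_rlt0.
  - apply: npair; exists t, a; split; first by split.
    by rewrite nmulr_rlt0.
  - by move: ht; rewrite -ta ltNge ltW.
exists 0, (-1); split => //; rewrite ?lexx ?ler01 //; first by right.
move=> t /andP[t0 t1]; rewrite subr0 mulN1r nmulr_rge0 ?oppr_lt0 //.
rewrite leNgt; apply/negP => ht; apply: npos; exists t; split => //.
by rewrite t0 t1.
Qed.
End S.

Section S. Context {R : realType}.
Lemma derive_zero_of_cst (a b t d : R) (U : R -> R) : a < t < b ->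
  (forall s, a <= s <= b -> U s = 0) -> is_derive t 1 U d -> d = 0.
Proof.
move=> tab hU hd.
have Hn : (\forall s \near t, U s = cst 0 s).
  have := near_in_itvoo (a:=a) (b:=b); rewrite /prop_in1 => /(_ t).
  rewrite in_itv /= tab => /(_ isT); apply: filterS => s.
  by rewrite in_itv /= => /andP[h1 h2]; apply: hU; rewrite !ltW.
have h := near_eq_is_derive Hn hd.
by rewrite -(@derive_val _ _ _ _ _ _ _ h) derive_cst.
Qed.
End S.

Section S. Context {R : realType}.
Lemma wc_compN (x : R -> R) (a b : R) : {within `[-b, -a], continuous x} ->
  {within `[a,b], continuous (fun t => x (- t))}.
Proof.
move/subspace_continuousP => hx; apply/subspace_continuousP => t tab.
have tA : [set` `[-b, -a]] (- t).
  by move: tab; rewrite /= !in_itv /= !lerN2 andbC.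
have := hx _ tA.
have hN : (-%R) @ within `[a, b] (nbhs t) --> within `[-b, -a] (nbhs (- t)).
  move=> P /=; rewrite !nbhs_filterE /within /= => hP.
  have c : (-%R) @ nbhs t --> nbhs (- t) by apply: continuousN; exact: cvg_id.
  have := c _ hP; rewrite /= => hP'.
  have hP2 : \forall s \near t, (- s \in `[-b,-a] -> P (- s)) := hP'.
  apply: filterS hP2 => s /= H sab; apply: H.
  by move: sab; rewrite /= !in_itv /= !lerN2 andbC.
move=> hxc; exact: (@cvg_comp _ _ _ (-%R) x (within `[a, b] (nbhs t)) (within `[-b, -a] (nbhs (-t))) _ hN hxc).
Qed.
End S.

Section S. Context {R : realType}.
Implicit Types (A : set R) (f g : R -> R).
Lemma wcD A f g : {within A, continuous f} -> {within A, continuous g} ->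
  {within A, continuous (fun t => f t + g t)}.
Proof. by move=> hf hg x; apply: continuousD; [exact: hf|exact: hg]. Qed.
Lemma wcB A f g : {within A, continuous f} -> {within A, continuous g} ->
  {within A, continuous (fun t => f t - g t)}.
Proof. by move=> hf hg x; apply: continuousB; [exact: hf|exact: hg]. Qed.
Lemma wcM A f g : {within A, continuous f} -> {within A, continuous g} ->
  {within A, continuous (fun t => f t * g t)}.
Proof. by move=> hf hg x; apply: continuousM; [exact: hf|exact: hg]. Qed.
Lemma wcV A f : {within A, continuous f} -> (forall t, A t -> f t != 0) ->
  {within A, continuous (fun t => (f t)^-1)}.
Proof.
move=> hf h0; rewrite continuous_subspace_in => x; rewrite inE => xA.
by apply: continuousV; [exact: h0|exact: hf].
Qed.
Lemma wcX A f m : {within A, continuous f} -> {within A, continuous (fun t => f t ^+ m)}.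
Proof.
move=> hf; elim: m => [|m ih].
  by move=> x; exact: cst_continuous.
have -> : (fun t => f t ^+ m.+1) = (fun t => f t * f t ^+ m) by apply: funext => t; rewrite exprS.
exact: wcM.
Qed.
Lemma wcG A f : continuous f -> {within A, continuous f}.
Proof. by move=> hf; exact: continuous_subspaceT. Qed.
End S.
Arguments is_deriveV' {R f x df}.
Arguments isd_der {R f x df}.
Section S. Context {R : realType}.
Implicit Types (f g : R -> R).
Lemma isdM f g (t df dg : R) : is_derive t 1 f df -> is_derive t 1 g dg ->
  is_derive t 1 (fun s => f s * g s) (f t * dg + g t * df).
Proof. move=> h1 h2; exact: (is_deriveM h1 h2). Qed.
Lemma isdB f g (t df dg : R) : is_derive t 1 f df -> is_derive t 1 g dg ->
  is_derive t 1 (fun s => f s - g s) (df - dg).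
Proof. move=> h1 h2; exact: (is_deriveB h1 h2). Qed.
Lemma isdX f (t df : R) m : is_derive t 1 f df ->
  is_derive t 1 (fun s => f s ^+ m) (m%:R * f t ^+ m.-1 * df).
Proof. move=> h1; have H := is_deriveX m h1; rewrite exprfctE in H; exact H. Qed.
Lemma isdN f (t df : R) : is_derive (- t) 1 f df ->
  is_derive t 1 (fun s => f (- s)) (- df).
Proof.
move=> h1; have := is_derive1_comp h1 (is_deriveNid t 1).
by rewrite mulrN1.
Qed.

Arguments isdM {f g t df dg}.
Arguments isdB {f g t df dg}.
Arguments isdX {f t df} m.
Arguments isdN {f t df}.
Lemma sub01 : `[(0:R), 1] `<=` `[-1, 1].
Proof. by move=> s; rewrite /= !in_itv /= => /andP[h1 h2]; rewrite h2 (le_trans _ h1) // lerN10. Qed.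
Lemma subN10 : `[- (1:R), - 0] `<=` `[-1, 1].
Proof. by move=> s; rewrite /= !in_itv /= oppr0 => /andP[h1 h2]; rewrite h1 (le_trans h2) // ler01. Qed.

Lemma Zlemma (f g P x : R -> R) :
  continuous f -> continuous g ->
  (forall t, f (-t) = 2 * P t - f t) -> (forall t, g (-t) = - g t) ->
  abel_solution f g x -> (forall t, -1 <= t <= 1 -> 0 < x t) ->
  exists W : R -> R, [/\ {within `[0,1], continuous W}, (forall t : R, 0 < W t),
     (forall t : R, 0 < t < 1 -> is_derive t 1 W
          (2 * g t / ((x t)^-1 + (x (-t))^-1) * W t)),
     {within `[0,1], continuous (fun t => W t * ((x t ^+ 2)^-1 - (x (-t) ^+ 2)^-1))} &
     (forall t : R, 0 < t < 1 -> is_derive t 1 (fun t => W t * ((x t ^+ 2)^-1 - (x (-t) ^+ 2)^-1))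
          (-4 * P t * W t))].
Proof.
move=> cf cg hf hg [xc xd] xpos.
have xc01 : {within `[0,1], continuous x} := continuous_subspaceW sub01 xc.
have yc01 : {within `[0,1], continuous (fun t => x (- t))}.
  exact: wc_compN (continuous_subspaceW subN10 xc).
have xp t : 0 <= t <= 1 -> 0 < x t.
  by move=> h; apply: xpos; apply: sub01.
have yp t : 0 <= t <= 1 -> 0 < x (- t).
  move=> /andP[h1 h2]; apply: xpos; rewrite lerN2 h2 /= lerNl.
  by rewrite (le_trans _ h1) // lerN10.
have bc : {within `[0,1], continuous (fun t => 2 * g t / ((x t)^-1 + (x (-t))^-1))}.
  apply: wcM; first by apply: wcM; [move=> ?; exact: cst_continuous|exact: wcG].
  apply: wcV; last first.
    by move=> t /= /[!in_itv] /= h; apply: lt0r_neq0; rewrite addr_gt0 // invr_gt0; [exact: xp|exact: yp].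
  apply: wcD; apply: wcV => //.
  - by move=> t /= /[!in_itv] /= h; apply: lt0r_neq0; exact: xp.
  - by move=> t /= /[!in_itv] /= h; apply: lt0r_neq0; exact: yp.
have [W [Wc Wp Wd]] := weight _ _ _ ltr01 bc.
exists W; split => //.
  apply: wcM => //; apply: wcB; apply: wcV; try apply: wcX => //.
  - by move=> t /= /[!in_itv] /= h; rewrite expf_neq0 // lt0r_neq0 //; exact: xp.
  - by move=> t /= /[!in_itv] /= h; rewrite expf_neq0 // lt0r_neq0 //; exact: yp.
move=> t /andP[t0 t1].
have t01 : 0 <= t <= 1 by rewrite !ltW.
have x0 := lt0r_neq0 (xp _ t01).
have y0 := lt0r_neq0 (yp _ t01).
have tI : -1 < t < 1 by rewrite t1 (lt_trans _ t0) // ltrN10.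
have tI' : -1 < - t < 1 by rewrite ltrN2 t1 /= ltrNl (lt_trans _ t0) // ltrN10.
have dx := xd t tI.
have dy := isdN (xd (- t) tI').
have dX2i := is_deriveV' (f := fun s => x s ^+ 2) (x := t) (expf_neq0 2 x0) (isdX 2 dx).
have dY2i := is_deriveV' (f := fun s => x (- s) ^+ 2) (x := t) (expf_neq0 2 y0) (isdX 2 dy).
have dZ := isdB dX2i dY2i.
have dU := isdM (Wd t (introT andP (conj t0 t1))) dZ.
apply: (is_derive_eq dU).
have s0 : x t + x (- t) != 0 by apply: lt0r_neq0; rewrite addr_gt0 //; [exact: xp|exact: yp].
rewrite hf hg /=; field.
by rewrite x0 y0 addrC s0.
Qed.

Lemma odd_int (F : R -> R) : continuous F -> (forall t, F (- t) = - F t) ->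
  (\int[@lebesgue_measure R]_(t in [set` `[(-1)%R, 1%R]]) (F t)%:E = 0)%E.
Proof.
move=> cF oF.
have cF' : {within `[-1, 1], continuous F} by exact: continuous_subspaceT.
have iF : (@lebesgue_measure R).-integrable `[-1, 1] (EFin \o F).
  by apply: continuous_compact_integrable => //; exact: segment_compact.
have := @integration_by_substitution_oppr R F (-1) 1 (le_trans (lerN10 R) ler01).
rewrite opprK => /(_ cF') E.
have E2 : (\int[@lebesgue_measure R]_(x in `[(-1)%R, 1%R]) ((F \o -%R) x)%:E =
    \int[@lebesgue_measure R]_(x in `[(-1)%R, 1%R]) - (F x)%:E)%E.
  by apply: eq_integral => x _; rewrite /= oF.
rewrite E2 in E.
rewrite integralN in E; last first.
  apply: fin_num_adde_defl; rewrite fin_numN.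
  by apply: integrable_neg_fin_num.
move: E; case: (\int[_]_(x in _) _)%E => [r||] //=.
by move=> /eqP; rewrite eqe -subr_eq0 opprK -mulr2n mulrn_eq0 /= => /eqP ->.
Qed.
Lemma sol_pos (f g x : R -> R) : continuous f -> continuous g ->
  abel_solution f g x -> 0 < x (-1) -> forall t, -1 <= t <= 1 -> 0 < x t.
Proof.
move=> cf cg [xc xd] x0.
apply: (@lin_pos R (-1) 1 x (fun t => f t * x t ^+ 2 + g t * x t)) => //.
- by apply: wcD; apply: wcM; [exact: wcG | exact: wcX | exact: wcG | exact: xc].
- move=> t tI; apply: (is_derive_eq (xd t tI)); ring.
Qed.

Lemma sol_order (f g x y : R -> R) : continuous f -> continuous g ->
  abel_solution f g x -> abel_solution f g y -> x (-1) < y (-1) ->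
  forall t, -1 <= t <= 1 -> x t < y t.
Proof.
move=> cf cg [xc xd] [yc yd] xy t tI; rewrite -subr_gt0.
move: t tI; apply: (@lin_pos R (-1) 1 (fun t => y t - x t)
   (fun t => f t * (y t ^+ 2 + y t * x t + x t ^+ 2) + g t * (y t + x t))) => //.
- exact: wcB.
- apply: wcD; apply: wcM; [exact: wcG | | exact: wcG | exact: wcD].
  by apply: wcD; [apply: wcD|]; [exact: wcX | exact: wcM | exact: wcX].
- move=> t tI; apply: (is_derive_eq (isdB (yd t tI) (xd t tI))); ring.
- by rewrite subr_gt0.
Qed.
End S.
Arguments is_deriveV' {R f x df}.
Arguments isd_der {R f x df}.
Arguments isdM {R f g t df dg}.
Arguments isdB {R f g t df dg}.
Arguments isdX {R f t df} m.
Arguments isdN {R f t df}.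

Theorem theorem2 (R : realType) (n : nat) (f p q : {poly R}) :
  (0 < n)%N -> ~~ odd n ->
  f = p \Po 'X^2 + 'X * (q \Po 'X^2) ->
  at_most_two_sign_changes (fun t : R => p.[t ^+ 2]) ->
  abel_center (fun t : R => f.[t]) (fun t : R => t ^+ n.-1) ->
  forall k : nat,
    (\int[@lebesgue_measure R]_(t in [set` `[(-1)%R, 1%R]])
        (f.[t] * ((t ^+ n - 1) / n%:R) ^+ k)%:E = 0)%E.
Proof.
move=> n0 nev Hf Hsc [del del0 Hc] k.
have oddn1 : odd n.-1 by move: n0 nev; case: (n) => //= m _; rewrite negbK.
have evn : (-1 : R) ^+ n = 1 by rewrite -signr_odd (negbTE nev).
have oddg t : (- t : R) ^+ n.-1 = - t ^+ n.-1.
  by rewrite exprNn -signr_odd oddn1 expr1 mulN1r.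
have fE t : f.[t] = p.[t ^+ 2] + t * q.[t ^+ 2].
  by rewrite Hf hornerD hornerM hornerX !horner_comp hornerXn.
have cf : continuous (fun t : R => f.[t]) by exact: continuous_horner.
have cg : continuous (fun t : R => t ^+ n.-1).
  have -> : (fun t : R => t ^+ n.-1) = horner ('X ^+ n.-1 : {poly R}) by apply: funext => t; rewrite hornerXn.
  exact: continuous_horner.
pose P t := p.[t ^+ 2].
have hf t : f.[- t] = 2 * P t - f.[t] by rewrite !fE sqrrN /P; ring.
have PE t : P t = (p \Po 'X^2).[t] by rewrite horner_comp hornerXn.
suff Pp0 : p \Po 'X^2 = 0.
  apply: odd_int.
    have -> : (fun t : R => f.[t] * ((t ^+ n - 1) / n%:R) ^+ k) =
       horner (f * (('X^n - 1) * (n%:R^-1)%:P) ^+ k).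
      by apply: funext => t; rewrite !hornerE.
    exact: continuous_horner.
  move=> t; rewrite !fE -!/(P _) !PE Pp0 !horner0 !add0r sqrrN exprNn evn mul1r.
  by rewrite !mulNr.
have d3 : 0 < del / 3 by rewrite divr_gt0.
have d2 : 0 < del / 2 by rewrite divr_gt0.
have d32 : del / 3 < del / 2 by rewrite ltr_pM2l // ltf_pV2 ?ltr_nat // ?posrE ?ltr0n.
have d2l : del / 2 < del by rewrite ltr_pdivrMr // ltr_pMr // ltr1n.
have [[xa [sa xa0]] Ua] := Hc (del / 3) ltac:(by rewrite gtr0_norm // (lt_trans d32 d2l)).
have [[xb [sb xb0]] Ub] := Hc (del / 2) ltac:(by rewrite gtr0_norm // d2l).
have xa1 := Ua xa sa xa0.
have xb1 := Ub xb sb xb0.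
have pa := sol_pos _ _ _ cf cg sa ltac:(by rewrite xa0).
have pb := sol_pos _ _ _ cf cg sb ltac:(by rewrite xb0).
have ord := sol_order _ _ _ _ cf cg sa sb ltac:(by rewrite xa0 xb0).
have [Wa [Wac Wap Wad uac uad]] := Zlemma _ _ _ _ cf cg hf oddg sa pa.
have [Wb [Wbc Wbp Wbd ubc ubd]] := Zlemma _ _ _ _ cf cg hf oddg sb pb.
pose ba (t : R) := 2 * t ^+ n.-1 / ((xa t)^-1 + (xa (- t))^-1).
pose bb (t : R) := 2 * t ^+ n.-1 / ((xb t)^-1 + (xb (- t))^-1).
have in01 (t : R) : 0 < t < 1 -> -1 <= t <= 1 /\ -1 <= - t <= 1.
  move=> /andP[t0 t1]; split; apply/andP; split; lra.
have bab (t : R) : 0 < t < 1 -> ba t < bb t.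
  move=> tI; have [h1 h2] := in01 t tI.
  have gp : 0 < 2 * t ^+ n.-1 by rewrite mulr_gt0 // exprn_gt0 //; case/andP: tI.
  rewrite /ba /bb ltr_pM2l // ltf_pV2 ?posrE ?addr_gt0 ?invr_gt0 ?pa ?pb //.
  by rewrite ltrD // ltf_pV2 ?posrE ?pa ?pb ?ord.
pose r (t : R) := Wb t / Wa t.
have rc : {within `[0, 1], continuous r}.
  apply: wcM => //; apply: wcV => // t _; exact: lt0r_neq0.
have rd (t : R) : 0 < t < 1 -> is_derive t 1 r ((bb t - ba t) * r t).
  move=> tI; apply: (is_derive_eq (isdM (Wbd t tI) (is_deriveV' (lt0r_neq0 (Wap t)) (Wad t tI)))).
  rewrite /r /ba /bb; move: (2 * _ / _) (2 * _ / _) => A B.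
  by field; exact: lt0r_neq0.
have rinc : forall x y, 0 <= x -> x < y -> y <= 1 -> r x < r y.
  apply: (incr _ _ _ _ rd) => // t tI.
  by rewrite mulr_gt0 ?subr_gt0 ?bab // divr_gt0.
have nt : no_triple P.
  move=> [a [b [c [[a0 ab bc c1] [h1 h2]]]]]; apply: Hsc.
  exists (- b), a, b, c; split.
    split => //; lra.
  split => //.
  by rewrite /= sqrrN mulrC.
have [ts [sg [ts01 sgE hs]]] := sign_struct _ nt.
pose ua (t : R) := Wa t * ((xa t ^+ 2)^-1 - (xa (- t) ^+ 2)^-1).
pose ub (t : R) := Wb t * ((xb t ^+ 2)^-1 - (xb (- t) ^+ 2)^-1).
pose V (t : R) := sg * (ub t - r ts * ua t).
have Vd (t : R) : 0 < t < 1 -> is_derive t 1 V (- 4 * Wa t * (sg * P t * (r t - r ts))).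
  move=> tI.
  apply: (is_derive_eq (isdM (f := fun _ => sg) (is_derive_cst sg t 1)
     (isdB (ubd t tI) (isdM (f := fun _ => r ts) (is_derive_cst (r ts) t 1) (uad t tI))))).
  rewrite /r; field.
  by have [h1 h2] := in01 t tI; rewrite !lt0r_neq0 ?pa ?pb.
have [ts0 ts1] := andP ts01.
have key (t : R) : 0 < t < 1 -> 0 <= sg * P t * (r t - r ts).
  move=> /andP[t0 t1]; have H0 : 0 < t <= 1 by rewrite t0 (ltW t1).
  have E1 : sg * (t - ts) * P t = (t - ts) * (sg * P t) by ring.
  have := hs t H0; rewrite E1.
  have [tl|tg|->] := ltgtP t ts; last by move=> _; rewrite subrr mulr0.
  - have rl : r t < r ts by apply: rinc => //; exact: ltW.
    rewrite nmulr_rge0 ?subr_lt0 // => H.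
    by rewrite mulr_le0 // subr_le0 ltW.
  - have rl : r ts < r t by apply: rinc => //; exact: ltW.
    rewrite pmulr_rge0 ?subr_gt0 // => H.
    by rewrite mulr_ge0 // subr_ge0 ltW.
have Vc : {within `[0, 1], continuous V}.
  apply: wcM; first by move=> ?; exact: cst_continuous.
  apply: wcB => //; apply: wcM => //; move=> ?; exact: cst_continuous.
have Vle : forall x y, 0 <= x -> x <= y -> y <= 1 -> V y <= V x.
  apply: (nincr _ _ _ _ Vd) => // t tI.
  rewrite !mulNr oppr_le0 mulr_ge0 ?key // mulr_ge0 // ltW //.
have V0 : V 0 = 0 by rewrite /V /ua /ub !oppr0 !subrr !mulr0 subrr mulr0.
have V1 : V 1 = 0 by rewrite /V /ua /ub xa1 xb1 -{1}xa0 -{1}xb0 !subrr !mulr0 subrr mulr0.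
have Vz (t : R) : 0 <= t <= 1 -> V t = 0.
  move=> /andP[t0 t1]; apply/eqP; rewrite eq_le; apply/andP; split.
    by rewrite -V0; apply: Vle.
  by rewrite -V1; apply: Vle.
have Pz (t : R) : 0 < t < 1 -> t != ts -> P t = 0.
  move=> tI tn.
  have := derive_zero_of_cst _ _ _ _ _ tI Vz (Vd t tI).
  move/eqP; rewrite !mulf_eq0 oppr_eq0 pnatr_eq0 /= (gt_eqF (Wap t)) /=.
  have sg0 : sg != 0 by case: sgE => ->; rewrite ?oppr_eq0 oner_eq0.
  rewrite (negbTE sg0) /= subr_eq0.
  have rn : r t != r ts.
    case: (ltgtP t ts) tn => // tt _.
    - by apply/negbT/lt_eqF/rinc => //; case/andP: tI => *; lra.
    - by apply/negbT/gt_eqF/rinc => //; case/andP: tI => *; lra.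
  by rewrite (negbTE rn) orbF => /eqP.
have [hts|hts] := lerP ts (2^-1).
- apply: (poly_zero_itv (p \Po 'X^2) (3/4) 1) => [|s /andP[s1 s2]]; first lra.
  rewrite -PE; apply: Pz; first by apply/andP; split; lra.
  by apply/negbT/gt_eqF; lra.
- apply: (poly_zero_itv (p \Po 'X^2) (4^-1) (2^-1)) => [|s /andP[s1 s2]]; first lra.
  rewrite -PE; apply: Pz; first by apply/andP; split; lra.
  by apply/negbT/lt_eqF; lra.
Qed.
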